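(* Let $\rho>0$ and $n\in\mathbb N$, and put $b_n=(2^n-1)\rho^{-n}$ if $\rho\le1$ and $b_n=2^n-1$ if $\rho\ge1$. Then for every $\varepsilon=(\varepsilon_1,\dots,\varepsilon_n)\in\mathbb C^n$ there exist $s\in\mathbb N$, $\mu_1,\dots,\mu_s\in\mathbb C$ with $|\mu_j|=\rho$, and $\alpha_1,\dots,\alpha_s\ge0$ such that $$\sum_{j=1}^s\alpha_j\le b_n\|\varepsilon\|\qquad\text{and}\qquad\sum_{j=1}^s\alpha_j\mu_j^k=\varepsilon_k\quad(1\le k\le n).$$
   Context: $\|\varepsilon\|=\max_{1\le k\le n}|\varepsilon_k|$. *)

(* Defs.v *)
(* Complex numbers: an arbitrary numClosedFieldType C
   (algebraically closed field with conjugation and norm, e.g. algC; the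
   paper's C is an instance). *)
From HB Require Import structures.
From mathcomp Require Import all_boot all_order all_algebra.
Set Implicit Arguments. Unset Strict Implicit. Unset Printing Implicit Defensive.
Import Order.TTheory GRing.Theory Num.Theory.
Local Open Scope ring_scope.

Definition maxC (C : numClosedFieldType) (x y : C) : C := if x <= y then y else x.

Definition supnorm (C : numClosedFieldType) (n : nat) (eps : 'I_n -> C) : C :=
  \big[@maxC C/0]_(k < n) `|eps k|.

Definition bn (C : numClosedFieldType) (n : nat) (rho : C) : C :=
  if rho <= 1 then (2 ^+ n - 1) / rho ^+ n else 2 ^+ n - 1.

(* Main.v *)
Require Import Defs.
From HB Require Import structures.
From mathcomp Require Import all_boot all_order all_algebra.
From mathcomp Require Import cyclic separable cyclotomic ring.
Import Order.TTheory GRing.Theory Num.Theory.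
Local Open Scope ring_scope.

Lemma prim_exists (C : numClosedFieldType) d : (0 < d)%N ->
  exists z : C, d.-primitive_root z.
Proof.
move=> d_gt0.
pose p : {poly C} := 'X^d - 1; have [r Dp] := closed_field_poly_normal p.
rewrite (monicP _) ?monicXnsubC // scale1r in Dp.
have rn1: all d.-unity_root r by apply/allP=> z; rewrite -root_prod_XsubC -Dp.
have sz_r: (d < (size r).+1)%N.
  by rewrite -(size_prod_XsubC r id) -Dp size_XnsubC.
have [|z] := hasP (has_prim_root d_gt0 rn1 _ sz_r); last by exists z.
by rewrite -separable_prod_XsubC -Dp separable_Xn_sub_1 // pnatr_eq0 -lt0n.
Qed.

Section S.
Variables (C : numClosedFieldType) (rho : C).
Hypothesis hrho : 0 < rho.

Definition valid (l : seq (C * C)) :=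
  all (fun p => (0 <= p.1) && (`|p.2| == rho)) l.
Definition mass (l : seq (C * C)) := \sum_(p <- l) p.1.
Definition mom (l : seq (C * C)) (m : nat) := \sum_(p <- l) p.1 * p.2 ^+ m.

Lemma norm_one_root d z : (0 < d)%N -> z ^+ d = 1 -> `|z| = 1 :> C.
Proof.
move=> d0 zd; apply/eqP; rewrite -(eqrXn2 d0) ?normr_ge0 // -normrX zd.
by rewrite expr1n normr1.
Qed.

Lemma single d (c : C) : (0 < d)%N -> exists l, valid l /\
  mass l = `|c| / rho ^+ d /\ (forall m, (0 < m < d)%N -> mom l m = 0) /\
  mom l d = c.
Proof.
move=> d0.
have [->|c0] := eqVneq c 0.
  exists [::]; rewrite /valid /mass /mom !big_nil normr0 mul0r.
  by split=> //; split=> //; split=> // m _; rewrite big_nil.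
have [z pz] := @prim_exists C d d0.
have zd := prim_expr_order pz.
have nz := @norm_one_root d z d0 zd.
pose w := rho ^+ d * (c / `|c|).
have [mu0 /rootP rmu] : exists x, root ('X^d - w%:P) x.
  by apply/closed_rootP; rewrite size_XnsubC // eqSS -lt0n.
have mud : mu0 ^+ d = w.
  by apply/eqP; rewrite -subr_eq0 -rmu !hornerE.
have nc : `|c| != 0 by rewrite normr_eq0.
have rho0 : rho != 0 by rewrite gt_eqF.
have nmu : `|mu0| = rho.
  apply/eqP; rewrite -(eqrXn2 d0) ?normr_ge0 ?ltW // -normrX mud /w.
  rewrite normrM normrX gtr0_norm // normrM normfV normr_id divff // mulr1.
  by [].
have dn0 : d%:R != 0 :> C by rewrite pnatr_eq0 -lt0n.
pose a := `|c| / (d%:R * rho ^+ d).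
have a0 : 0 <= a.
  by rewrite /a divr_ge0 ?normr_ge0 // mulr_ge0 ?ler0n // exprn_ge0 // ltW.
pose l := [seq (a, mu0 * z ^+ j) | j <- iota 0 d].
have momE m : mom l m = a * mu0 ^+ m * \sum_(j < d) (z ^+ m) ^+ j.
  rewrite /mom big_map mulr_sumr -(big_mkord xpredT (fun j => a * mu0 ^+ m * (z ^+ m) ^+ j)).
  rewrite /index_iota subn0; apply: eq_bigr => j _ /=.
  by rewrite exprMn -!exprM mulnC mulrA.
exists l; split; [|split; [|split]].
- apply/allP => p /mapP [j _ ->] /=; rewrite a0 /= normrM normrX nz expr1n.
  by rewrite mulr1 nmu.
- rewrite /mass big_map /=; have -> : iota 0 d = index_iota 0 d by rewrite /index_iota subn0.
  rewrite sumr_const_nat subn0 /a -mulr_natr.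
  by field; rewrite dn0 expf_neq0.
- move=> m /andP [m0 md].
  rewrite momE.
  have zm : z ^+ m != 1.
    by rewrite -(prim_order_dvd pz) gtnNdvd.
  have : (z ^+ m) ^+ d - 1 = 0 by rewrite -exprM mulnC exprM zd expr1n subrr.
  rewrite subrX1 => /eqP; rewrite mulf_eq0 subr_eq0 (negbTE zm) /= => /eqP ->.
  by rewrite mulr0.
- rewrite momE zd.
  under eq_bigr do rewrite expr1n.
  rewrite sumr_const card_ord mud /w /a.
  by field; rewrite dn0 nc expf_neq0.
Qed.

Lemma mass_ge0 l : valid l -> 0 <= mass l.
Proof.
move=> /allP vl; rewrite /mass big_seq; apply: sumr_ge0 => p /vl /andP [] //.
Qed.

Lemma mom_bound l m : valid l -> `|mom l m| <= mass l * rho ^+ m.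
Proof.
move=> /allP vl; rewrite /mom /mass mulr_suml.
apply: (le_trans (ler_norm_sum _ _ _)); rewrite !big_seq; apply: ler_sum => p pl.
have /andP [p1 /eqP p2] := vl p pl.
by rewrite normrM normrX p2 ger0_norm.
Qed.

Lemma main n (e : nat -> C) K : 0 <= K ->
  (forall m, (0 < m <= n)%N -> `|e m| <= K * rho ^+ m) ->
  exists l, valid l /\ mass l <= (2 ^+ n - 1) * K /\
    forall m, (0 < m <= n)%N -> mom l m = e m.
Proof.
move=> K0; elim: n => [|n IH] he.
  exists [::]; rewrite /valid /mass big_nil expr0 subrr mul0r; split=> //; split=> //.
  by move=> m /andP [m0]; rewrite leqn0 => /eqP m0'; rewrite m0' in m0.
have [l1 [v1 [ms1 mo1]]] : exists l, valid l /\ mass l <= (2 ^+ n - 1) * K /\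
    forall m, (0 < m <= n)%N -> mom l m = e m.
  by apply: IH => m /andP [m0 mn]; apply: he; rewrite m0 (leq_trans mn).
pose r := e n.+1 - mom l1 n.+1.
have [l2 [v2 [ms2 [mo2 mo2']]]] := single n.+1 r (ltn0Sn n).
have rhon : 0 < rho ^+ n.+1 by rewrite exprn_gt0.
have hr : `|r| <= (K + mass l1) * rho ^+ n.+1.
  rewrite mulrDl; apply: (le_trans (ler_normB _ _)); apply: lerD.
    by apply: he; rewrite ltn0Sn leqnn.
  exact: mom_bound.
exists (l1 ++ l2); split; [|split].
- by rewrite /valid all_cat; apply/andP; split.
- rewrite /mass big_cat /= -/(mass l1) -/(mass l2) ms2.
  have h2 : `|r| / rho ^+ n.+1 <= K + mass l1.
    by rewrite ler_pdivrMr.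
  apply: (le_trans (lerD ms1 h2)).
  have : K + mass l1 <= K + (2 ^+ n - 1) * K by rewrite lerD2l.
  move=> h3; apply: (le_trans (lerD (lexx _) h3)).
  by rewrite exprS le_eqVlt; apply/orP; left; apply/eqP; ring.
- move=> m /andP [m0 mn]; rewrite /mom big_cat /= -/(mom l1 m) -/(mom l2 m).
  have [mn'|mn'] := ltnP m n.+1.
    by rewrite mo2 ?m0 // addr0 mo1 // m0 -ltnS.
  have -> : m = n.+1 by apply/eqP; rewrite eqn_leq mn mn'.
  by rewrite mo2' /r addrC subrK.
Qed.

End S.

Lemma maxC_ge (C : numClosedFieldType) (x y : C) : 0 <= x -> 0 <= y ->
  x <= Defs.maxC x y /\ y <= Defs.maxC x y.
Proof.
move=> x0 y0; rewrite /Defs.maxC; case: ifP => // hxy; split=> //.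
have := real_leVge (ger0_real x0) (ger0_real y0).
by rewrite hxy.
Qed.

Lemma big_maxC (C : numClosedFieldType) n (eps : 'I_n -> C) (r : seq 'I_n) :
  0 <= \big[@Defs.maxC C/0]_(i <- r) `|eps i| /\
  forall k, k \in r -> `|eps k| <= \big[@Defs.maxC C/0]_(i <- r) `|eps i|.
Proof.
elim: r => [|a r [IH0 IH]]; first by rewrite big_nil.
rewrite big_cons; have [h1 h2] := @maxC_ge C _ _ (normr_ge0 (eps a)) IH0.
split; first exact: le_trans h1.
move=> k; rewrite inE => /orP [/eqP -> //| kr].
exact: le_trans (IH k kr) h2.
Qed.

Lemma supnorm_ge (C : numClosedFieldType) n (eps : 'I_n -> C) :
  0 <= supnorm eps /\ forall k, `|eps k| <= supnorm eps.
Proof.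
have [h1 h2] := @big_maxC C n eps (index_enum 'I_n).
split; first exact: h1.
by move=> k; apply: h2; rewrite mem_index_enum.
Qed.

Theorem lemma4p8 (C : numClosedFieldType) (rho : C) (n : nat)
    (eps : 'I_n -> C) :
  0 < rho ->
  exists (s : nat) (mu : 'I_s -> C) (alpha : 'I_s -> C),
    (forall j, `|mu j| = rho) /\
    (forall j, 0 <= alpha j) /\
    \sum_(j < s) alpha j <= bn n rho * supnorm eps /\
    (forall k : 'I_n, \sum_(j < s) alpha j * mu j ^+ k.+1 = eps k).
Proof.
move=> hrho.
have [S0 Sge] := @supnorm_ge C n eps.
set S := supnorm eps in S0 Sge *.
pose e m := if m is m'.+1 then
  (match insub m' : option 'I_n with Some k => eps k | None => 0 end) else 0.
have ek (k : 'I_n) : e k.+1 = eps k by rewrite /e valK.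
have eb m : `|e m| <= S.
  case: m => [|m] /=; first by rewrite normr0.
  by case: (insub m) => [k|] //; rewrite normr0.
pose K := if rho <= 1 then S / rho ^+ n else S.
have rhon : 0 < rho ^+ n by rewrite exprn_gt0.
have K0 : 0 <= K by rewrite /K; case: ifP => // _; rewrite divr_ge0 // ltW.
have hK : forall m, (0 < m <= n)%N -> `|e m| <= K * rho ^+ m.
  move=> m /andP [m0 mn]; apply: (le_trans (eb m)); rewrite /K.
  case: ifP => hr.
    rewrite mulrAC ler_pdivlMr // ler_wpM2l //.
    by have := ler_wiXn2l (ltW hrho) hr mn.
  have h1 : 1 <= rho.
    have := real_leVge (gtr0_real hrho) (@real1 C); by rewrite hr.
  by rewrite -{1}(mulr1 S) ler_wpM2l // exprn_ege1.
have [l [v [ms mo]]] := @main C rho hrho n e K K0 hK.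
have vl := allP v.
exists (size l), (fun j => (nth (0, 0) l j).2), (fun j => (nth (0, 0) l j).1).
split; [|split; [|split]].
- move=> j; have /andP [_ /eqP ->] // := vl _ (mem_nth (0, 0) (ltn_ord j)).
- move=> j; have /andP [-> _] // := vl _ (mem_nth (0, 0) (ltn_ord j)).
- have -> : \sum_(j < size l) (nth (0, 0) l j).1 = mass C l.
    by rewrite /mass (big_nth (0, 0)) big_mkord.
  apply: (le_trans ms); rewrite /bn /K; case: ifP => _; last by [].
  by rewrite mulrA mulrAC.
- move=> k; rewrite -ek -mo; last by rewrite ltn0Sn ltn_ord.
  by rewrite /mom (big_nth (0, 0)) big_mkord.
Qed.
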